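(* Let $G$ be a finite group and $p$ a prime. For nonidentity $p$-subgroups $H,K$ of $G$ put \[ [\mu]([H],[K])=\frac{1}{|N_G(H)|}\sum_{L\in[K]}\mu(H,L), \] where $[K]$ is the set of $G$-conjugates of $K$. Then $[\mu]$ depends only on the conjugacy classes $[H],[K]$, and the matrix $\big([\mu]([H],[K])\big)$ is the inverse of the matrix $\big(|N_G(H,K)|\big)_{[H],[K]}$, both indexed by the set of $G$-conjugacy classes of nonidentity $p$-subgroups of $G$.
   Context: $N_G(H,K)=\{g\in G: g^{-1}Hg\le K\}$; its cardinality depends only on the conjugacy classes of $H$ and $K$. $\mu(H,L)$ is the Möbius function of the poset of all subgroups of $G$ ($\mu(H,H)=1$, $\mu(H,L)=-\sum_{H\le M<L}\mu(H,M)$ for $H<L$, $0$ if $H\not\le L$). *)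

(* Defs.v *)
From mathcomp Require Import all_boot all_order all_algebra all_fingroup all_solvable.
Set Implicit Arguments. Unset Strict Implicit. Unset Printing Implicit Defensive.
Import GRing.Theory Num.Theory.
Local Open Scope group_scope.

Section Defs.
Variable gT : finGroupType.

(* Möbius function of the poset of all subgroups (of gT; intervals [H,L]
   do not depend on the ambient group).  Defined by the recursion
   mu(H,H)=1, mu(H,L) = - sum_{H<=M<L} mu(H,M) for H<L, 0 otherwise.
   [n] is fuel; [mobius] uses fuel #|L|.+1, which exceeds the length of
   any chain of subgroups below L. *)
Fixpoint mobius_rec (n : nat) (H L : {group gT}) : int :=
  if n is n'.+1 then
    if H == L then 1%R
    else if H \proper L then
      (- \sum_(M : {group gT} | (H \subset M) && (M \proper L)) mobius_rec n' H M)%R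
    else 0%R
  else 0%R.

Definition mobius (H L : {group gT}) : int := mobius_rec #|L|.+1 H L.

Definition transporter (G H K : {set gT}) : {set gT} :=
  [set g in G | H :^ g \subset K].

Definition gclass (G : {set gT}) (K : {group gT}) : {set {group gT}} :=
  orbit 'JG G K.

Definition ntpsub (p : nat) (G : {set gT}) : {set {group gT}} :=
  [set H : {group gT} | [&& H \subset G, p.-group H & H != 1 :> {set gT}]].

Definition pclasses (p : nat) (G : {set gT}) : {set {set {group gT}}} :=
  [set gclass G H | H in ntpsub p G].

Definition cmu (G : {group gT}) (H K : {group gT}) : rat :=
  ((#|'N_G(H)|%:R)^-1 * \sum_(L in gclass G K) (mobius H L)%:~R)%R.

Definition crep (C : {set {group gT}}) : {group gT} := odflt 1%G [pick L in C].

Definition cls_idx (p : nat) (G : {group gT}) (i : 'I_#|pclasses p G|) : {group gT} :=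
  crep (enum_val i).

Definition Nmat (p : nat) (G : {group gT}) : 'M[rat]_(#|pclasses p G|) :=
  \matrix_(i, j) (#|transporter G (cls_idx i) (cls_idx j)|%:R)%R.

Definition Mumat (p : nat) (G : {group gT}) : 'M[rat]_(#|pclasses p G|) :=
  \matrix_(i, j) cmu G (cls_idx i) (cls_idx j).

End Defs.

(* Main.v *)
Require Import Defs.
From mathcomp Require Import all_boot all_order all_algebra all_fingroup all_solvable.
Set Implicit Arguments. Unset Strict Implicit. Unset Printing Implicit Defensive.
Import GRing.Theory Num.Theory.
Local Open Scope group_scope.

Lemma mobius_rec_stable (gT : finGroupType) n m (H L : {group gT}) :
  #|L| < n -> #|L| < m -> mobius_rec n H L = mobius_rec m H L.
Proof.
elim: n m H L => [|n IH] [|m] H L //= hn hm.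
case: eqP => // _; case: ifP => // _; congr (- _)%R.
apply: eq_bigr => M /andP [_ hM]; apply: IH.
- by apply: leq_trans (proper_card hM) _.
- by apply: leq_trans (proper_card hM) _.
Qed.

Lemma mobiusE (gT : finGroupType) (H L : {group gT}) :
  mobius H L = if H == L then 1%R else if H \proper L then
    (- \sum_(M : {group gT} | (H \subset M) && (M \proper L)) mobius H M)%R
    else 0%R.
Proof.
rewrite {1}/mobius /=; case: eqP => // _; case: ifP => // _; congr (- _)%R.
apply: eq_bigr => M /andP [_ hM]; rewrite /mobius; apply: mobius_rec_stable => //.
exact: proper_card hM.
Qed.

Lemma mobius0 (gT : finGroupType) (H L : {group gT}) :
  ~~ (H \subset L) -> mobius H L = 0%R.
Proof.
move=> hHL; rewrite mobiusE; case: eqP => [e|_]; first by rewrite e subxx in hHL.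
by case: ifP => // /proper_sub; rewrite (negbTE hHL).
Qed.

Lemma mobius_sum (gT : finGroupType) (H L : {group gT}) :
  (\sum_(M : {group gT} | M \subset L) mobius H M)%R = (H == L)%:R%R.
Proof.
rewrite (bigID (fun M : {group gT} => H \subset M)) /=.
rewrite [X in (_ + X)%R]big1 ?addr0; last first.
  by move=> M /andP [_ h]; apply: mobius0.
case: (boolP (H \subset L)) => hHL; last first.
  rewrite big_pred0; last first.
    move=> M; apply/negbTE; apply/andP => -[hML hHM].
    by rewrite (subset_trans hHM hML) in hHL.
  by case: eqP => // e; rewrite e subxx in hHL.
rewrite (bigD1 L) /=; last by rewrite subxx.
case: eqP => [<-|ne].
  rewrite mobiusE eqxx big1 ?addr0 // => M /andP [/andP [hMH hHM] ne].
  by case/eqP: ne; apply: val_inj; apply/eqP; rewrite eqEsubset hMH.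
have pHL : H \proper L.
  rewrite properEneq hHL andbT; apply/negP => /eqP e; apply: ne; exact: val_inj.
rewrite mobiusE pHL; case: eqP => // _.
rewrite addrC; apply/eqP; rewrite subr_eq0; apply/eqP.
apply: eq_bigl => M; rewrite properEneq.
case: (M \subset L); rewrite ?andbF ?andbT //=.
Qed.

Definition conjGr (gT : finGroupType) (g : gT) (H : {group gT}) : {group gT} :=
  (H :^ g)%G.

Lemma conjGr_inj (gT : finGroupType) (g : gT) : injective (@conjGr gT g).
Proof. by move=> A B /(congr1 val) /= /conjsg_inj e; apply: val_inj. Qed.

Lemma mobius_rec_conj (gT : finGroupType) g n (H L : {group gT}) :
  mobius_rec n (conjGr g H) (conjGr g L) = mobius_rec n H L.
Proof.
elim: n H L => [|n IH] H L //=.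
rewrite (inj_eq (@conjGr_inj gT g)) properJ.
case: eqP => // _; case: ifP => // _; congr (- _)%R.
rewrite (reindex_inj (@conjGr_inj gT g)) /=.
apply: eq_big => [M|M _]; first by rewrite conjSg properJ.
exact: IH.
Qed.

Lemma mobius_conj (gT : finGroupType) g (H L : {group gT}) :
  mobius (conjGr g H) (conjGr g L) = mobius H L.
Proof.
have e: #|conjGr g L| = #|L| by rewrite /conjGr /= cardJg.
by rewrite /mobius e mobius_rec_conj. Qed.
Local Open Scope ring_scope.
Lemma card_setP (T : finType) (A : {set T}) (P : pred T) :
  #|[set g in A | P g]| = (\sum_(g in A) P g)%N.
Proof.
rewrite -sum1_card (eq_bigl (fun g => (g \in A) && P g)) => [|g]; last by rewrite inE.
by rewrite big_mkcondr /=; apply: eq_bigr => g _; case: (P g).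
Qed.

Lemma S_conj (gT : finGroupType) (G H : {group gT}) p g :
  g \in G -> (conjGr g H \in ntpsub p G) = (H \in ntpsub p G).
Proof.
move=> hg; rewrite !inE /conjGr /= pgroupJ conjsg_eq1.
by rewrite -{1}(conjGid hg) conjSg.
Qed.

Lemma JG_act (gT : finGroupType) (H : {group gT}) g : 'JG%act H g = conjGr g H.
Proof. by []. Qed.

Lemma gclass_conj (gT : finGroupType) (G K L : {group gT}) g :
  g \in G -> (conjGr g L \in gclass G K) = (L \in gclass G K).
Proof. by move=> hg; rewrite /gclass; apply: orbit_transl; exact: (mem_orbit 'JG L hg). Qed.

Lemma crep_spec (gT : finGroupType) (G : {group gT}) p C :
  C \in pclasses p G -> crep C \in ntpsub p G /\ gclass G (crep C) = C.
Proof.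
case/imsetP => H0 hH0 ->; rewrite /crep; case: pickP => [L hL | h]; last first.
  by have := h H0; rewrite /gclass orbit_refl.
split; last by apply/orbit_eqP.
by case/orbitP: hL => a ha <-; rewrite JG_act S_conj.
Qed.

Lemma transp_conj (gT : finGroupType) (G L K : {group gT}) x :
  x \in G -> #|transporter G (conjGr x L) K| = #|transporter G L K|.
Proof.
move=> hx; rewrite -[RHS](card_lcoset _ x^-1); apply: eq_card => g.
rewrite mem_lcoset !inE invgK groupMl // conjsgM.
by [].
Qed.

Lemma intr_sumS (I : finType) (P : pred I) (F : I -> int) :
  ((\sum_(i | P i) F i)%:~R : rat) = \sum_(i | P i) (F i)%:~R.
Proof. by apply: (big_morph (fun z : int => z%:~R : rat)) => //; apply: intrD. Qed.

Lemma mob_sumS (gT : finGroupType) (G H K : {group gT}) p :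
  H \in ntpsub p G -> K \in ntpsub p G ->
  \sum_(L in ntpsub p G) ((mobius H L)%:~R * (L \subset K)%:R : rat) = (H == K)%:R.
Proof.
move=> hH hK.
transitivity (\sum_(L in ntpsub p G | L \subset K) ((mobius H L)%:~R : rat)).
  rewrite [RHS]big_mkcondr; apply: eq_bigr => L _.
  by case: (L \subset K); rewrite ?mulr1 ?mulr0.
rewrite -intr_sumS.
have -> : (\sum_(L in ntpsub p G | L \subset K) mobius H L =
           \sum_(L : {group gT} | L \subset K) mobius H L)%R.
  rewrite [RHS](bigID (mem (ntpsub p G))) /= [X in (_ + X)%R]big1 ?addr0; last first.
    move=> L /andP [hLK hLS]; apply: mobius0; apply/negP => hHL.
    move: hLS; rewrite !inE; move: hK hH; rewrite !inE => /and3P [hKG pK _] /and3P [_ _ ntH].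
    rewrite (subset_trans hLK hKG) (pgroupS hLK pK) /=.
    by rewrite (subG1_contra hHL ntH).
  by apply: eq_bigl => L; rewrite andbC.
by rewrite mobius_sum; case: (H == K).
Qed.

Lemma eqG_conj (gT : finGroupType) (H : {group gT}) g :
  (H == conjGr g^-1 H) = (g \in 'N(H)).
Proof.
apply/eqP/normP => [e|e].
  by have /= e' := congr1 val e; rewrite {1}e' conjsgKV.
by apply: val_inj; rewrite /conjGr /= -{2}e conjsgK.
Qed.

Lemma main_mul (gT : finGroupType) (G : {group gT}) (p : nat) :
  (Mumat p G *m Nmat p G = 1%:M)%R.
Proof.
have acts : [acts G, on ntpsub p G | 'JG].
  by apply/actsP => g hg H0; exact: S_conj.
have [/eqP hcov htriv _] := and3P (orbit_partition acts).
apply/matrixP => i k; rewrite [LHS]mxE [RHS]mxE.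
under eq_bigr => j _ do rewrite !mxE.
have [hHS eHi] := crep_spec (enum_valP i).
have [hKS eKk] := crep_spec (enum_valP k).
rewrite -/(@cls_idx gT p G i) in hHS eHi; rewrite -/(@cls_idx gT p G k) in hKS eKk.
transitivity (#|'N_G(@cls_idx gT p G i)|%:R^-1 * \sum_(L in ntpsub p G)
   (mobius (@cls_idx gT p G i) L)%:~R * (#|transporter G L (@cls_idx gT p G k)|%:R : rat)).
  rewrite /cmu; under eq_bigr => j _ do rewrite -mulrA mulr_suml.
  rewrite -mulr_sumr; congr (_ * _).
  transitivity (\sum_j \sum_(L in gclass G (@cls_idx gT p G j))
     (mobius (@cls_idx gT p G i) L)%:~R * (#|transporter G L (@cls_idx gT p G k)|%:R : rat)).
    apply: eq_bigr => j _; apply: eq_bigr => L hL.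
    by case/orbitP: hL => a ha <-; rewrite JG_act transp_conj.
  transitivity (\sum_(C in pclasses p G) \sum_(L in gclass G (crep C))
     (mobius (@cls_idx gT p G i) L)%:~R * (#|transporter G L (@cls_idx gT p G k)|%:R : rat)).
    by rewrite (big_enum_val (A := mem (pclasses p G))).
  transitivity (\sum_(C in pclasses p G) \sum_(L in C)
     (mobius (@cls_idx gT p G i) L)%:~R * (#|transporter G L (@cls_idx gT p G k)|%:R : rat)).
    by apply: eq_bigr => C hC; have [_ ->] := crep_spec hC.
  by rewrite -(big_trivIset _ htriv) hcov.
transitivity (#|'N_G(@cls_idx gT p G i)|%:R^-1 *
   \sum_(g in G) ((((@cls_idx gT p G i) == conjGr g^-1 (@cls_idx gT p G k)) : nat)%:R : rat)).
  congr (_ * _).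
  under eq_bigr => L _ do rewrite /transporter card_setP natr_sum mulr_sumr.
  rewrite exchange_big /=; apply: eq_bigr => g hg.
  rewrite -(mob_sumS hHS (K := conjGr g^-1 (@cls_idx gT p G k))); last by rewrite S_conj ?groupV.
  by apply: eq_bigr => L _; rewrite sub_conjg.
case: (eqVneq i k) => [<-|nik].
  under eq_bigr => g _ do rewrite eqG_conj.
  have -> : 'N_G(@cls_idx gT p G i) = [set g in G | g \in 'N(@cls_idx gT p G i)].
    by apply/setP => g; rewrite !inE.
  rewrite card_setP natr_sum.
  rewrite mulVf // -natr_sum pnatr_eq0 -lt0n -card_setP.
  by apply/card_gt0P; exists 1%g; rewrite inE !group1.
rewrite big1 ?mulr0 // => g hg.
case: eqP => // eH; exfalso; case/eqP: nik; apply: enum_val_inj.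
rewrite -eHi -eKk; apply/orbit_eqP; apply/orbitP; exists g^-1%g; first by rewrite groupV.
by rewrite JG_act eH.
Qed.

Theorem proposition3p5 (gT : finGroupType) (G : {group gT}) (p : nat) :
  prime p ->
  (forall H H' K K' : {group gT},
      H \in ntpsub p G -> K \in ntpsub p G ->
      H' \in gclass G H -> K' \in gclass G K ->
      cmu G H K = cmu G H' K') /\
  (Mumat p G *m Nmat p G = 1%:M)%R /\ (Nmat p G *m Mumat p G = 1%:M)%R.
Proof.
move=> _; split; last first.
  by have h := main_mul G p; split=> //; apply: mulmx1C.
move=> H H' K K' _ _ hH' hK'.
case/orbitP: hH' => a ha <-; rewrite JG_act.
have eK : gclass G K' = gclass G K by apply/orbit_eqP.
rewrite /cmu eK; congr (_ * _).
  by rewrite /conjGr /= normJ -[in RHS](conjGid ha) -conjIg cardJg.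
rewrite [RHS](reindex_inj (@conjGr_inj gT a)) /=.
apply: eq_big => [L|L _]; first by rewrite gclass_conj.
by rewrite mobius_conj.
Qed.
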